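(* If $\mathbb{C}$ is a regular majority category, then the Pairwise Chinese Remainder Theorem holds in $\mathbb{C}$.
   Context: A category is regular if it has finite limits and coequalizers of kernel pairs and regular epimorphisms are pullback-stable. For $w:S\to W$ and subobject $A$ of $W$, $w\in_S A$ means $w$ factors through a representative of $A$. A ternary relation $R\leqslant X\times Y\times Z$ is majority-selecting if for all $S$ and $x,x':S\to X$, $y,y':S\to Y$, $z,z':S\to Z$: $(x,y,z')\in_S R$, $(x,y',z)\in_S R$, $(x',y,z)\in_S R$ imply $(x,y,z)\in_S R$; a majority category is one in which every ternary relation is majority-selecting. For an equivalence relation $\theta$ on $X$ and $a,b:S\to X$, $a\equiv b\bmod\theta$ means $(a,b)\in_S\theta$. An equivalence relation is effective if it is the kernel pair of some morphism. Given $a_1,\dots,a_m:S\to X$ and equivalence relations $\theta_1,\dots,\theta_m$ on $X$, the system $x\equiv a_i\bmod\theta_i$ ($i=1,\dots,m$) is approximately solvable if there are a regular epimorphism $\alpha:Q\to S$ and a morphism $a:Q\to X$ with $a\equiv a_i\alpha\bmod\theta_i$ for all $i$; it is approximately pairwise solvable if for all $i,j$ the two-equation subsystem for $i,j$ is approximately solvable. The Pairwise Chinese Remainder Theorem holds in $\mathbb{C}$ if for every object $X$, every $m$, all $a_1,\dots,a_m:S\to X$ and all effective equivalence relations $\theta_1,\dots,\theta_m$ on $X$, approximate pairwise solvability implies approximate solvability. *)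

(* Defs.v *)
Set Implicit Arguments.
Unset Strict Implicit.

Record Category := {
  Obj :> Type;
  Hom : Obj -> Obj -> Type;
  idm : forall A, Hom A A;
  comp : forall A B D, Hom B D -> Hom A B -> Hom A D;
  comp_id_l : forall A B (f : Hom A B), comp (idm B) f = f;
  comp_id_r : forall A B (f : Hom A B), comp f (idm A) = f;
  comp_assoc : forall A B D E (h : Hom D E) (g : Hom B D) (f : Hom A B),
      comp h (comp g f) = comp (comp h g) f
}.

Arguments Hom {c} _ _.
Arguments idm {c} _.
Arguments comp {c A B D} _ _.

Notation "g \o f" := (comp g f) (at level 40, left associativity).

Section Defs.
Context {C : Category}.

Definition mono {A B : C} (f : Hom A B) : Prop :=
  forall S (g h : Hom S A), f \o g = f \o h -> g = h.

Definition is_terminal (T : C) : Prop :=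
  forall A : C, exists! f : Hom A T, True.

Definition is_product2 {X Y P : C} (p1 : Hom P X) (p2 : Hom P Y) : Prop :=
  forall S (x : Hom S X) (y : Hom S Y),
    exists! u : Hom S P, p1 \o u = x /\ p2 \o u = y.

Definition is_product3 {X Y Z P : C}
  (p1 : Hom P X) (p2 : Hom P Y) (p3 : Hom P Z) : Prop :=
  forall S (x : Hom S X) (y : Hom S Y) (z : Hom S Z),
    exists! u : Hom S P, p1 \o u = x /\ p2 \o u = y /\ p3 \o u = z.

Definition is_equalizer {E X Y : C} (f g : Hom X Y) (e : Hom E X) : Prop :=
  f \o e = g \o e /\
  forall S (h : Hom S X), f \o h = g \o h -> exists! u : Hom S E, e \o u = h.

Definition is_pullback {X Y Z P : C} (f : Hom X Z) (g : Hom Y Z)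
  (p1 : Hom P X) (p2 : Hom P Y) : Prop :=
  f \o p1 = g \o p2 /\
  forall S (x : Hom S X) (y : Hom S Y), f \o x = g \o y ->
    exists! u : Hom S P, p1 \o u = x /\ p2 \o u = y.

Definition is_coequalizer {A B Q : C} (f g : Hom A B) (q : Hom B Q) : Prop :=
  q \o f = q \o g /\
  forall T (h : Hom B T), h \o f = h \o g -> exists! u : Hom Q T, u \o q = h.

Definition regular_epi {B Q : C} (q : Hom B Q) : Prop :=
  exists (A : C) (f g : Hom A B), is_coequalizer f g q.

Definition has_finite_limits : Prop :=
  (exists T : C, is_terminal T) /\
  (forall X Y : C, exists (P : C) (p1 : Hom P X) (p2 : Hom P Y), is_product2 p1 p2) /\
  (forall (X Y : C) (f g : Hom X Y), exists (E : C) (e : Hom E X), is_equalizer f g e) /\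
  (forall (X Y Z : C) (f : Hom X Z) (g : Hom Y Z),
      exists (P : C) (p1 : Hom P X) (p2 : Hom P Y), is_pullback f g p1 p2).

Definition has_coeq_of_kernel_pairs : Prop :=
  forall (X Y : C) (f : Hom X Y) (K : C) (k1 k2 : Hom K X),
    is_pullback f f k1 k2 -> exists (Q : C) (q : Hom X Q), is_coequalizer k1 k2 q.

Definition regular_epis_pullback_stable : Prop :=
  forall (A B Z : C) (q : Hom A Z) (g : Hom B Z) (P : C) (p1 : Hom P A) (p2 : Hom P B),
    regular_epi q -> is_pullback q g p1 p2 -> regular_epi p2.

Definition regular_category : Prop :=
  has_finite_limits /\ has_coeq_of_kernel_pairs /\ regular_epis_pullback_stable.

(* A binary relation R <= X x Y: a mono into a (chosen) product cone. *)
Record Rel2 (X Y : C) := {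
  r2P : C; r2p1 : Hom r2P X; r2p2 : Hom r2P Y;
  r2prod : is_product2 r2p1 r2p2;
  r2O : C; r2m : Hom r2O r2P; r2mono : mono r2m }.

Record Rel3 (X Y Z : C) := {
  r3P : C; r3p1 : Hom r3P X; r3p2 : Hom r3P Y; r3p3 : Hom r3P Z;
  r3prod : is_product3 r3p1 r3p2 r3p3;
  r3O : C; r3m : Hom r3O r3P; r3mono : mono r3m }.

(* (x,y) \in_S R : the morphism (x,y) : S -> X x Y factors through R *)
Definition mem2 {X Y S : C} (R : Rel2 X Y) (x : Hom S X) (y : Hom S Y) : Prop :=
  exists u : Hom S (r2O R),
    r2p1 R \o (r2m R \o u) = x /\ r2p2 R \o (r2m R \o u) = y.

Definition mem3 {X Y Z S : C} (R : Rel3 X Y Z)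
  (x : Hom S X) (y : Hom S Y) (z : Hom S Z) : Prop :=
  exists u : Hom S (r3O R),
    r3p1 R \o (r3m R \o u) = x /\ r3p2 R \o (r3m R \o u) = y /\
    r3p3 R \o (r3m R \o u) = z.

Definition majority_selecting {X Y Z : C} (R : Rel3 X Y Z) : Prop :=
  forall (S : C) (x x' : Hom S X) (y y' : Hom S Y) (z z' : Hom S Z),
    mem3 R x y z' -> mem3 R x y' z -> mem3 R x' y z -> mem3 R x y z.

Definition majority_category : Prop :=
  forall (X Y Z : C) (R : Rel3 X Y Z), majority_selecting R.

Definition is_equivalence_relation {X : C} (E : Rel2 X X) : Prop :=
  (forall S (a : Hom S X), mem2 E a a) /\
  (forall S (a b : Hom S X), mem2 E a b -> mem2 E b a) /\
  (forall S (a b c : Hom S X), mem2 E a b -> mem2 E b c -> mem2 E a c).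

Definition effective_equivalence_relation {X : C} (E : Rel2 X X) : Prop :=
  is_equivalence_relation E /\
  exists (Y : C) (f : Hom X Y),
    is_pullback f f (r2p1 E \o r2m E) (r2p2 E \o r2m E).

Definition approx_solvable {X S : C} (I : nat -> Prop)
  (a : nat -> Hom S X) (theta : nat -> Rel2 X X) : Prop :=
  exists (Q : C) (alpha : Hom Q S) (x : Hom Q X),
    regular_epi alpha /\ forall i, I i -> mem2 (theta i) x (a i \o alpha).

Definition approx_pairwise_solvable {X S : C} (m : nat)
  (a : nat -> Hom S X) (theta : nat -> Rel2 X X) : Prop :=
  forall i j, i < m -> j < m ->
    approx_solvable (fun k => k = i \/ k = j) a theta.

Definition pairwise_CRT : Prop :=
  forall (X S : C) (m : nat) (a : nat -> Hom S X) (theta : nat -> Rel2 X X),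
    (forall i, i < m -> effective_equivalence_relation (theta i)) ->
    approx_pairwise_solvable m a theta ->
    approx_solvable (fun k => k < m) a theta.

End Defs.

(* Main.v *)
Require Import Defs.
From Stdlib Require Import List Lia.
Import ListNotations.

Ltac nrm := repeat rewrite <- comp_assoc.

Lemma rw_tail {C : Category} {A B D : C} {g : Hom B D} {f : Hom A B} {k : Hom A D} :
  g \o f = k -> forall Z (x : Hom Z A), g \o (f \o x) = k \o x.
Proof. intros H Z x. rewrite comp_assoc, H. reflexivity. Qed.

Definition epi {C : Category} {A B : C} (f : Hom A B) : Prop :=
  forall D (g h : Hom B D), g \o f = h \o f -> g = h.

Lemma regepi_epi {C : Category} {A B : C} {q : Hom A B} : regular_epi q -> epi q.
Proof.
  intros [E [f [g [Hfg Hu]]]] D g1 h1 H.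
  destruct (Hu D (g1 \o q)) as [u [Hu1 Hu2]].
  { nrm. rewrite Hfg. reflexivity. }
  rewrite <- (Hu2 g1 eq_refl). apply Hu2. symmetry; exact H.
Qed.

Lemma epi_comp {C : Category} {A B D : C} {f : Hom A B} {g : Hom B D} :
  epi f -> epi g -> epi (g \o f).
Proof.
  intros Hf Hg Z x y H. apply Hg. apply Hf. rewrite <- !comp_assoc. exact H.
Qed.

Lemma id_regepi {C : Category} (A : C) : regular_epi (idm A).
Proof.
  exists A, (idm A), (idm A). split; [reflexivity|].
  intros T h _. exists h. split; [apply comp_id_r|].
  intros u' H. rewrite comp_id_r in H. auto.
Qed.

Lemma lift {C : Category} {A B I D : C} (q : Hom A B) (m : Hom I D)
  (u : Hom A I) (v : Hom B D) :
  regular_epi q -> mono m -> m \o u = v \o q ->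
  exists d, d \o q = u /\ m \o d = v.
Proof.
  intros Hq Hm Hsq.
  pose proof (regepi_epi Hq) as Hep.
  destruct Hq as [E [f [g [Hfg Hu]]]].
  destruct (Hu I u) as [d [Hd _]].
  { apply Hm. nrm. rewrite !(rw_tail Hsq). nrm. rewrite Hfg. reflexivity. }
  exists d. split; auto. apply Hep. nrm. rewrite Hd. first [exact Hsq | symmetry; exact Hsq].
Qed.

Lemma prod_ext {C : Category} {X Y P S : C} {p1 : Hom P X} {p2 : Hom P Y}
  {u v : Hom S P} : is_product2 p1 p2 -> p1 \o u = p1 \o v -> p2 \o u = p2 \o v -> u = v.
Proof.
  intros Hp H1 H2. destruct (Hp S (p1 \o v) (p2 \o v)) as [w [_ Hw]].
  rewrite <- (Hw u (conj H1 H2)). apply Hw. auto.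
Qed.

Lemma image_fact {C : Category} (HR : regular_category (C:=C)) {A B : C} (h : Hom A B) :
  exists I (e : Hom A I) (m : Hom I B) K (k1 k2 : Hom K A),
    is_pullback h h k1 k2 /\ is_coequalizer k1 k2 e /\ mono m /\ m \o e = h.
Proof.
  destruct HR as [[_ [_ [_ Hpb]]] [Hcoeq Hstab]].
  destruct (Hpb _ _ _ h h) as [K [k1 [k2 HK]]].
  destruct (Hcoeq _ _ h K k1 k2 HK) as [I [e He]].
  pose proof He as [He1 He2].
  destruct (He2 B h (proj1 HK)) as [m [Hm _]].
  exists I, e, m, K, k1, k2. split; [auto|split; [auto|split; [|auto]]].
  assert (Hre : regular_epi e) by (exists K, k1, k2; auto).
  intros S u v Huv.
  destruct (Hpb _ _ _ e u) as [P1 [c1 [d1 HP1]]].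
  pose proof (Hstab _ _ _ e u _ c1 d1 Hre HP1) as Hd1.
  destruct (Hpb _ _ _ e (v \o d1)) as [P2 [c2 [d2 HP2]]].
  pose proof (Hstab _ _ _ e _ _ c2 d2 Hre HP2) as Hd2.
  destruct HP1 as [HP1 _]. destruct HP2 as [HP2 _].
  destruct HK as [HK1 HK2].
  destruct (HK2 P2 (c1 \o d2) c2) as [w [[Hw1 Hw2] _]].
  { rewrite <- Hm. nrm. rewrite (rw_tail HP1). rewrite HP2. nrm.
    rewrite (rw_tail Huv). nrm. reflexivity. }
  apply (epi_comp (regepi_epi Hd2) (regepi_epi Hd1)). nrm.
  transitivity (e \o (c1 \o d2)).
  { rewrite (rw_tail HP1). nrm. reflexivity. }
  rewrite <- Hw1. rewrite comp_assoc, He1. rewrite <- comp_assoc, Hw2, HP2. nrm. reflexivity.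
Qed.

Lemma regepi_comp {C : Category} (HR : regular_category (C:=C)) {A B D : C}
  (f : Hom A B) (g : Hom B D) : regular_epi f -> regular_epi g -> regular_epi (g \o f).
Proof.
  intros Hf Hg.
  destruct (image_fact HR (g \o f)) as [I [e [m [K [k1 [k2 [HK [He [Hm Hme]]]]]]]]].
  assert (Hre : regular_epi e) by (exists K, k1, k2; auto).
  destruct (lift f m e (idm D \o g) Hf Hm) as [d1 [Hd1 Hd1']].
  { rewrite Hme. rewrite comp_id_l. reflexivity. }
  destruct (lift g m d1 (idm D) Hg Hm) as [d [Hd Hd']].
  { rewrite Hd1'. reflexivity. }
  assert (Hdm : d \o m = idm I).
  { apply Hm. rewrite comp_assoc, Hd', comp_id_l, comp_id_r. reflexivity. }
  exists K, k1, k2. destruct He as [He1 He2]. split.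
  { destruct HK as [HK _]. exact HK. }
  intros T h Hh. destruct (He2 T h Hh) as [u [Hu Hu']].
  exists (u \o d). split.
  - rewrite <- Hme. nrm. rewrite (rw_tail Hdm). rewrite comp_id_l. exact Hu.
  - intros u' Hu2. rewrite (Hu' (u' \o m)).
    + nrm. rewrite Hd', comp_id_r. reflexivity.
    + nrm. rewrite Hme. exact Hu2.
Qed.

Lemma pullback_regepi {C : Category} (HR : regular_category (C:=C)) {A Z B : C}
  (q : Hom A Z) (g : Hom B Z) : regular_epi q ->
  exists P (p1 : Hom P A) (p2 : Hom P B), q \o p1 = g \o p2 /\ regular_epi p2.
Proof.
  intros Hq. destruct HR as [[_ [_ [_ Hpb]]] [_ Hstab]].
  destruct (Hpb _ _ _ q g) as [P [p1 [p2 HP]]].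
  exists P, p1, p2. split; [apply HP|]. eapply Hstab; eauto.
Qed.

Lemma refine2 {C : Category} (HR : regular_category (C:=C)) {Q1 Q2 S : C}
  (a1 : Hom Q1 S) (a2 : Hom Q2 S) : regular_epi a1 -> regular_epi a2 ->
  exists P (b : Hom P S) (p1 : Hom P Q1) (p2 : Hom P Q2),
    regular_epi b /\ a1 \o p1 = b /\ a2 \o p2 = b.
Proof.
  intros H1 H2. destruct (pullback_regepi HR a1 a2 H1) as [P [p1 [p2 [Hc Hp2]]]].
  exists P, (a2 \o p2), p1, p2. split; [|split; auto].
  apply regepi_comp; auto.
Qed.

Lemma prod3 {C : Category} (HR : regular_category (C:=C)) (Y1 Y2 Y3 : C) :
  exists P (q1 : Hom P Y1) (q2 : Hom P Y2) (q3 : Hom P Y3), is_product3 q1 q2 q3.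
Proof.
  destruct HR as [[_ [Hprod _]] _].
  destruct (Hprod Y2 Y3) as [P23 [r2 [r3 Hr]]].
  destruct (Hprod Y1 P23) as [P [q1 [q Hq]]].
  exists P, q1, (r2 \o q), (r3 \o q).
  intros S x y z.
  destruct (Hr S y z) as [w [[Hw1 Hw2] _]].
  destruct (Hq S x w) as [u [[Hu1 Hu2] Hu]].
  exists u. split.
  - split; auto. nrm. rewrite Hu2. auto.
  - intros u' [H1 [H2 H3]]. apply Hu. split; auto.
    apply (prod_ext Hr); rewrite ?Hw1, ?Hw2, <- ?comp_assoc in *; auto.
Qed.

Definition solv3 {C : Category} {X S Y1 Y2 Y3 : C}
  (f1 : Hom X Y1) (f2 : Hom X Y2) (f3 : Hom X Y3)
  (b1 : Hom S Y1) (b2 : Hom S Y2) (b3 : Hom S Y3) (P1 P2 P3 : Prop) : Prop :=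
  exists Q (al : Hom Q S) (x : Hom Q X), regular_epi al /\
    (P1 -> f1 \o x = b1 \o al) /\ (P2 -> f2 \o x = b2 \o al) /\ (P3 -> f3 \o x = b3 \o al).

Lemma triple {C : Category} (HR : regular_category (C:=C)) (HM : majority_category (C:=C))
  {X S Y1 Y2 Y3 : C}
  (f1 : Hom X Y1) (f2 : Hom X Y2) (f3 : Hom X Y3)
  (b1 : Hom S Y1) (b2 : Hom S Y2) (b3 : Hom S Y3) :
  solv3 f1 f2 f3 b1 b2 b3 False True True ->
  solv3 f1 f2 f3 b1 b2 b3 True False True ->
  solv3 f1 f2 f3 b1 b2 b3 True True False ->
  solv3 f1 f2 f3 b1 b2 b3 True True True.
Proof.
  intros [Q1 [a1 [x1 [Ha1 [_ [H12 H13]]]]]]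
         [Q2 [a2 [x2 [Ha2 [H21 [_ H23]]]]]]
         [Q3 [a3 [x3 [Ha3 [H31 [H32 _]]]]]].
  specialize (H12 I); specialize (H13 I); specialize (H21 I); specialize (H23 I);
  specialize (H31 I); specialize (H32 I).
  destruct (refine2 HR a1 a2 Ha1 Ha2) as [P0 [b0 [p1 [p2 [Hb0 [E1 E2]]]]]].
  destruct (refine2 HR b0 a3 Hb0 Ha3) as [P [be [p0 [p3 [Hbe [E0 E3]]]]]].
  destruct (prod3 HR Y1 Y2 Y3) as [PY [q1 [q2 [q3 Hp]]]].
  destruct (Hp X f1 f2 f3) as [h [[Hh1 [Hh2 Hh3]] _]].
  destruct (image_fact HR h) as [Im [e [m [K [k1 [k2 [HK [He [Hm Hme]]]]]]]]].
  assert (Hre : regular_epi e) by (exists K, k1, k2; auto).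
  set (R := {| r3P := PY; r3p1 := q1; r3p2 := q2; r3p3 := q3; r3prod := Hp;
               r3O := Im; r3m := m; r3mono := Hm |}).
  assert (Hq1 : q1 \o m \o e = f1) by (rewrite <- comp_assoc, Hme; exact Hh1).
  assert (Hq2 : q2 \o m \o e = f2) by (rewrite <- comp_assoc, Hme; exact Hh2).
  assert (Hq3 : q3 \o m \o e = f3) by (rewrite <- comp_assoc, Hme; exact Hh3).
  assert (Hy1 : a1 \o (p1 \o p0) = be) by (rewrite comp_assoc, E1; exact E0).
  assert (Hy2 : a2 \o (p2 \o p0) = be) by (rewrite comp_assoc, E2; exact E0).
  assert (Hmaj : mem3 R (b1 \o be) (b2 \o be) (b3 \o be)).
  { apply (HM _ _ _ R P (b1 \o be) (f1 \o (x1 \o (p1 \o p0)))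
                        (b2 \o be) (f2 \o (x2 \o (p2 \o p0)))
                        (b3 \o be) (f3 \o (x3 \o p3))); unfold R; cbn.
    - exists (e \o (x3 \o p3)); cbn; split; [|split].
      + rewrite !comp_assoc, Hq1, H31; rewrite <- !comp_assoc; rewrite ?Hy1, ?Hy2, ?E3; reflexivity.
      + rewrite !comp_assoc, Hq2, H32; rewrite <- !comp_assoc; rewrite ?Hy1, ?Hy2, ?E3; reflexivity.
      + rewrite !comp_assoc, Hq3; rewrite <- !comp_assoc; reflexivity.
    - exists (e \o (x2 \o (p2 \o p0))); cbn; split; [|split].
      + rewrite !comp_assoc, Hq1, H21; rewrite <- !comp_assoc; rewrite ?Hy1, ?Hy2, ?E3; reflexivity.
      + rewrite !comp_assoc, Hq2; rewrite <- !comp_assoc; reflexivity.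
      + rewrite !comp_assoc, Hq3, H23; rewrite <- !comp_assoc; rewrite ?Hy1, ?Hy2, ?E3; reflexivity.
    - exists (e \o (x1 \o (p1 \o p0))); cbn; split; [|split].
      + rewrite !comp_assoc, Hq1; rewrite <- !comp_assoc; reflexivity.
      + rewrite !comp_assoc, Hq2, H12; rewrite <- !comp_assoc; rewrite ?Hy1, ?Hy2, ?E3; reflexivity.
      + rewrite !comp_assoc, Hq3, H13; rewrite <- !comp_assoc; rewrite ?Hy1, ?Hy2, ?E3; reflexivity. }
  destruct Hmaj as [u [Hu1 [Hu2 Hu3]]]. unfold R in Hu1, Hu2, Hu3; cbn in Hu1, Hu2, Hu3.
  destruct (pullback_regepi HR e u Hre) as [P' [c [g [Hc Hg]]]].
  exists P', (be \o g), c. split; [apply regepi_comp; auto|].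
  split; [|split]; intros _.
  - rewrite <- Hq1, <- !comp_assoc, Hc, (comp_assoc _ be g), <- Hu1, <- !comp_assoc. reflexivity.
  - rewrite <- Hq2, <- !comp_assoc, Hc, (comp_assoc _ be g), <- Hu2, <- !comp_assoc. reflexivity.
  - rewrite <- Hq3, <- !comp_assoc, Hc, (comp_assoc _ be g), <- Hu3, <- !comp_assoc. reflexivity.
Qed.

Lemma mem2_eff {C : Category} {X Y S : C} (E : Rel2 X X) (F : Hom X Y)
  (x y : Hom S X) :
  is_pullback F F (r2p1 E \o r2m E) (r2p2 E \o r2m E) ->
  (mem2 E x y <-> F \o x = F \o y).
Proof.
  intros [Hc Hp]. split.
  - intros [u [H1 H2]]. subst x y.
    transitivity ((F \o (r2p1 E \o r2m E)) \o u); [rewrite !comp_assoc; reflexivity|].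
    rewrite Hc, !comp_assoc; reflexivity.
  - intros H. destruct (Hp S x y H) as [w [[H1 H2] _]].
    exists w. rewrite !comp_assoc. auto.
Qed.

Lemma listeq {C : Category} (HR : regular_category (C:=C)) {X S : C} (m : nat)
  (a : nat -> Hom S X) (theta : nat -> Rel2 X X) :
  (forall i, i < m -> effective_equivalence_relation (theta i)) ->
  forall l, (forall k, In k l -> k < m) ->
  exists Y (f : Hom X Y) (b : Hom S Y), forall Q (al : Hom Q S) (x : Hom Q X),
    f \o x = b \o al <-> (forall k, In k l -> mem2 (theta k) x (a k \o al)).
Proof.
  intros Heff. induction l as [|k l IH]; intros Hl.
  - destruct HR as [[[T HT] _] _].
    destruct (HT X) as [f _]. destruct (HT S) as [b _].
    exists T, f, b. intros Q al x. split.
    + intros _ k [].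
    + intros _. destruct (HT Q) as [t [_ Ht]].
      rewrite <- (Ht (f \o x) I). apply Ht. exact I.
  - destruct IH as [Y [f [b Hfb]]]. { intros k' Hk'. apply Hl. right; auto. }
    destruct (Heff k (Hl k (or_introl eq_refl))) as [_ [Yk [Fk HFk]]].
    pose proof HR as [[_ [Hprod _]] _].
    destruct (Hprod Yk Y) as [P [p1 [p2 Hp]]].
    destruct (Hp X Fk f) as [g [[Hg1 Hg2] _]].
    destruct (Hp S (Fk \o a k) b) as [c [[Hc1 Hc2] _]].
    exists P, g, c. intros Q al x. split.
    + intros H k' [<-|Hk'].
      * apply (mem2_eff _ _ _ _ HFk).
        rewrite comp_assoc, <- Hc1, <- Hg1, <- !comp_assoc, H. reflexivity.
      * apply (Hfb Q al x); auto.
        rewrite <- Hg2, <- Hc2, <- !comp_assoc, H. reflexivity.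
    + intros H. apply (prod_ext Hp).
      * rewrite !comp_assoc, Hg1, Hc1, <- comp_assoc.
        apply (mem2_eff _ _ _ _ HFk). apply H. left; auto.
      * rewrite !comp_assoc, Hg2, Hc2.
        apply (Hfb Q al x). intros k' Hk'. apply H. right; auto.
Qed.

Lemma solv_mono {C : Category} {X S : C} (I J : nat -> Prop)
  (a : nat -> Hom S X) (theta : nat -> Rel2 X X) :
  (forall k, I k -> J k) -> approx_solvable J a theta -> approx_solvable I a theta.
Proof.
  intros HIJ [Q [al [x [Hal H]]]]. exists Q, al, x. split; auto.
Qed.

Theorem lemma5p7 (C : Category) :
  @regular_category C -> @majority_category C -> @pairwise_CRT C.
Proof.
  intros HR HM X S m a theta Heff Hpw.
  assert (Main : forall n l, length l <= n -> (forall k, In k l -> k < m) ->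
            approx_solvable (fun k => In k l) a theta).
  { induction n as [|n IH]; intros l Hlen Hl.
    - destruct l; [|simpl in Hlen; lia].
      exists S, (idm S), (a 0 \o idm S). split; [apply id_regepi|]. intros i [].
    - destruct l as [|i1 [|i2 [|i3 rest]]].
      + exists S, (idm S), (a 0 \o idm S). split; [apply id_regepi|]. intros i [].
      + apply (solv_mono _ (fun k => k = i1 \/ k = i1)).
        { intros k [<-|[]]; auto. }
        apply Hpw; apply Hl; left; auto.
      + apply (solv_mono _ (fun k => k = i1 \/ k = i2)).
        { intros k [<-|[<-|[]]]; auto. }
        apply Hpw; apply Hl; simpl; auto.
      + simpl in Hlen.
        destruct (listeq HR m a theta Heff [i1]) as [Y1 [f1 [b1 H1]]].
        { intros k [<-|[]]; apply Hl; simpl; auto. }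
        destruct (listeq HR m a theta Heff [i2]) as [Y2 [f2 [b2 H2]]].
        { intros k [<-|[]]; apply Hl; simpl; auto. }
        destruct (listeq HR m a theta Heff (i3 :: rest)) as [Y3 [f3 [b3 H3]]].
        { intros k Hk; apply Hl; simpl in *; tauto. }
        assert (Hs : solv3 f1 f2 f3 b1 b2 b3 True True True).
        { apply (triple HR HM).
          - destruct (IH (i2 :: i3 :: rest)) as [Q [al [x [Hal Hx]]]].
            { simpl; lia. } { intros k Hk; apply Hl; simpl in *; tauto. }
            exists Q, al, x. split; auto. split; [intros []|split; intros _].
            + apply H2. intros k [<-|[]]. apply Hx. simpl; auto.
            + apply H3. intros k Hk. apply Hx. simpl in *; tauto.
          - destruct (IH (i1 :: i3 :: rest)) as [Q [al [x [Hal Hx]]]].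
            { simpl; lia. } { intros k Hk; apply Hl; simpl in *; tauto. }
            exists Q, al, x. split; auto. split; [intros _|split; [intros []|intros _]].
            + apply H1. intros k [<-|[]]. apply Hx. simpl; auto.
            + apply H3. intros k Hk. apply Hx. simpl in *; tauto.
          - destruct (IH [i1; i2]) as [Q [al [x [Hal Hx]]]].
            { simpl; lia. } { intros k Hk; apply Hl; simpl in *; tauto. }
            exists Q, al, x. split; auto. split; [intros _|split; [intros _|intros []]].
            + apply H1. intros k [<-|[]]. apply Hx. simpl; auto.
            + apply H2. intros k [<-|[]]. apply Hx. simpl; auto. }
        destruct Hs as [Q [al [x [Hal [Hx1 [Hx2 Hx3]]]]]].
        exists Q, al, x. split; auto.
        intros k [<-|[<-|Hk]].
        * apply (proj1 (H1 Q al x) (Hx1 I)). left; auto.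
        * apply (proj1 (H2 Q al x) (Hx2 I)). left; auto.
        * apply (proj1 (H3 Q al x) (Hx3 I)). exact Hk. }
  apply (solv_mono _ (fun k => In k (seq 0 m))).
  { intros k Hk. apply in_seq. lia. }
  apply (Main m). { rewrite length_seq; auto. }
  intros k Hk. apply in_seq in Hk. lia.
Qed.
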